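(* Let $K$ be a field of characteristic zero, $L_n=K[x_1^{\pm1},\ldots,x_n^{\pm1}]$, $W_n=\mathrm{Der}_K(L_n)$ and $\sigma\in\mathrm{Aut}_{\mathrm{Lie}}(W_n)$. Then there is $A\in\mathrm{GL}_n(\mathbb{Z})$ with $\sigma(H)=AH$, and $\sigma_A\sigma$ fixes each of $H_1,\ldots,H_n$, where $\sigma_A\in\mathrm{Aut}_{K\text{-alg}}(L_n)$, $\sigma_A(x_i)=\prod_jx_j^{a_{ji}}$, acts on $W_n$ by $\delta\mapsto\sigma_A\delta\sigma_A^{-1}$.
   Context: $H_i=x_i\partial_i$, $H=(H_1,\ldots,H_n)^T$, and $\sigma(H)=AH$ means $\sigma(H_i)=\sum_ja_{ij}H_j$ for all $i$, where $A=(a_{ij})$. *)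

(* Defs.v *)
From HB Require Import structures.
From mathcomp Require Import all_boot all_algebra.
From mathcomp Require Import freeg.
From mathcomp Require Import ring.

Set Implicit Arguments.
Unset Strict Implicit.
Unset Printing Implicit Defensive.

Import GRing.Theory.
Local Open Scope ring_scope.

Section Laurent.
Variables (K : fieldType) (n : nat).

Definition expo := 'cV[int]_n.
Definition laurent := {freeg expo / K}.

Definition lmul (p q : laurent) : laurent :=
  \sum_(k <- dom p) \sum_(l <- dom q) << (coeff k p * coeff l q) *g (k + l) >>.

Definition is_derivation (D : laurent -> laurent) :=
  (forall (a : K) (u v : laurent), D (a *: u + v) = a *: D u + D v) /\
  (forall u v : laurent, D (lmul u v) = lmul (D u) v + lmul u (D v)).

Definition Hop (i : 'I_n) (p : laurent) : laurent :=
  \sum_(m <- dom p) << (coeff m p * (m i ord0)%:~R) *g m >>.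

Lemma sum_delta (s : seq expo) (f : expo -> K) x : uniq s ->
  \sum_(m <- s) f m * (m == x)%:R = (x \in s)%:R * f x.
Proof.
move=> us; case: (boolP (x \in s)) => xs.
  rewrite (bigD1_seq x) //= eqxx mulr1 big1 ?addr0 ?mul1r // => m /negPf ->.
  by rewrite mulr0.
rewrite mul0r big_seq big1 // => m ms; case: eqP => [e|_]; last by rewrite mulr0.
by rewrite -e ms in xs.
Qed.

Lemma coeff_Hop i p x : coeff x (Hop i p) = coeff x p * (x i ord0)%:~R.
Proof.
rewrite /Hop raddf_sum /=.
under eq_bigr do rewrite coeffU.
rewrite (sum_delta (fun m => coeff m p * (m i ord0)%:~R)) ?uniq_dom //.
case: (boolP (x \in dom p)) => xd; first by rewrite mul1r.
by rewrite mul0r coeff_outdom // mul0r.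
Qed.

Lemma coeff_lmul p q x : coeff x (lmul p q) =
  \sum_(k <- dom p) \sum_(l <- dom q) coeff k p * coeff l q * (k + l == x)%:R.
Proof.
rewrite /lmul raddf_sum /=; apply: eq_bigr => k _.
by rewrite raddf_sum /=; apply: eq_bigr => l _; rewrite coeffU.
Qed.

Lemma sum_dom_ext (p : laurent) (s : seq expo) (F : expo -> K) :
  uniq s -> {subset dom p <= s} -> (forall k, k \notin dom p -> F k = 0) ->
  \sum_(k <- dom p) F k = \sum_(k <- s) F k.
Proof.
move=> us sub F0.
rewrite [RHS](bigID (fun k => k \in dom p)) /= [X in _ + X]big1 ?addr0;
  last by move=> k /F0.
rewrite -[RHS]big_filter; apply: perm_big.
apply: uniq_perm; [exact: uniq_dom | exact: filter_uniq |].
move=> k; rewrite mem_filter; case: (boolP (k \in dom p)) => //= kd.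
by rewrite sub.
Qed.

Lemma dom_Hop_sub i p : {subset dom (Hop i p) <= dom p}.
Proof.
move=> k; rewrite !mem_dom coeff_Hop; apply: contra => /eqP ->.
by rewrite mul0r.
Qed.

Lemma Hop_der i : is_derivation (Hop i).
Proof.
split.
  move=> a u v; apply/eqP/freeg_eqP => x.
  by rewrite coeffD coeffZ !coeff_Hop coeffD coeffZ; ring.
move=> u v; apply/eqP/freeg_eqP => x.
rewrite coeffD coeff_Hop !coeff_lmul.
rewrite (sum_dom_ext (p := Hop i u) (s := dom u)) ?uniq_dom //; last 2 first.
- exact: dom_Hop_sub.
- move=> k; rewrite mem_dom negbK => /eqP ->.
  by rewrite big1 // => l _; rewrite !mul0r.
under [X in _ = _ + X]eq_bigr => k _.
  rewrite (sum_dom_ext (p := Hop i v) (s := dom v)) ?uniq_dom //; last 2 first.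
  - exact: dom_Hop_sub.
  - move=> l; rewrite mem_dom negbK => /eqP ->.
    by rewrite mulr0 !mul0r.
  over.
rewrite -big_split /= big_distrl /=; apply: eq_bigr => k _.
rewrite -big_split /= big_distrl /=; apply: eq_bigr => l _.
rewrite !coeff_Hop; case: eqP => [<-|_]; last by rewrite !mulr0 mul0r addr0.
rewrite mxE intrD; ring.
Qed.

Definition Wn := {D : laurent -> laurent | is_derivation D}.

Definition Hw (i : 'I_n) : Wn := exist _ (Hop i) (Hop_der i).

(* Linear
   combinations and brackets are stated relationally on the underlying maps. *)
Definition is_Lie_aut (sigma : Wn -> Wn) :=
  [/\ bijective sigma,
   (forall (a : K) (D E F : Wn),
      (forall p, sval F p = a *: sval D p + sval E p) ->
      forall p, sval (sigma F) p = a *: sval (sigma D) p + sval (sigma E) p) &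
   (forall D E F : Wn,
      (forall p, sval F p = sval D (sval E p) - sval E (sval D p)) ->
      forall p, sval (sigma F) p =
        sval (sigma D) (sval (sigma E) p) - sval (sigma E) (sval (sigma D) p))].

(* sigma_A : the K-algebra automorphism of L_n with x_i |-> prod_j x_j^(a_ji),
   i.e. x^m |-> x^(A m) on monomials, extended K-linearly. *)
Definition sigmaA (A : 'M[int]_n) (p : laurent) : laurent :=
  \sum_(m <- dom p) << coeff m p *g (A *m m) >>.

Definition conjA (A : 'M[int]_n) (d : laurent -> laurent) (p : laurent) :
  laurent := sigmaA A (d (sigmaA (invmx A) p)).

End Laurent.

(* Main.v *)
Require Import Defs.
From HB Require Import structures.
From mathcomp Require Import all_boot all_algebra.
From mathcomp Require Import all_order freeg ring zify.
Import Order.TTheory GRing.Theory Num.Theory.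
Local Open Scope ring_scope.
From Stdlib Require Import FunctionalExtensionality ProofIrrelevance Classical.
Set Implicit Arguments.
Unset Strict Implicit.
Unset Printing Implicit Defensive.

Section Basic.
Variables (K : fieldType) (n : nat).
Local Notation L := (laurent K n).
Local Notation expo := (expo n).

Definition mono (m : expo) : L := << m >>.

Lemma coeff_mono m x : coeff x (mono m) = (m == x)%:R.
Proof. by rewrite coeffU mul1r. Qed.

Lemma freegU_scale (c : K) (m : expo) : << c *g m >> = c *: mono m :> L.
Proof.
by apply/eqP/freeg_eqP => x; rewrite coeffZ coeff_mono coeffU.
Qed.

Lemma sum_dom_coeff (q : L) (F : expo -> K) y :
  \sum_(l <- dom q) coeff l q * F l * (l == y)%:R = coeff y q * F y.
Proof.
rewrite (sum_delta (fun l => coeff l q * F l)) ?uniq_dom //.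
case: (boolP (y \in dom q)) => yd; first by rewrite mul1r.
by rewrite mul0r coeff_outdom // mul0r.
Qed.

Lemma sum_dom_coeff1 (q : L) y :
  \sum_(l <- dom q) coeff l q * (l == y)%:R = coeff y q.
Proof.
rewrite (sum_delta (fun l => coeff l q)) ?uniq_dom //.
case: (boolP (y \in dom q)) => yd; first by rewrite mul1r.
by rewrite mul0r coeff_outdom.
Qed.

Definition lin (f : L -> L) := forall (a : K) (u v : L), f (a *: u + v) = a *: f u + f v.

Lemma lin0 f : lin f -> f 0 = 0.
Proof.
move=> lf; have h := lf 1 0 0; rewrite !scale1r addr0 in h.
have : f 0 - f 0 = f 0 + f 0 - f 0 by rewrite -h.
by rewrite subrr addrK => <-.
Qed.

Lemma linD f : lin f -> forall u v, f (u + v) = f u + f v.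
Proof. by move=> lf u v; rewrite -{1}[u]scale1r lf scale1r. Qed.

Lemma linZ f : lin f -> forall a u, f (a *: u) = a *: f u.
Proof. by move=> lf a u; rewrite -[a *: u]addr0 lf lin0 // addr0. Qed.

Lemma linB f : lin f -> forall u v, f (u - v) = f u - f v.
Proof.
move=> lf u v; rewrite -scaleN1r linD // linZ // scaleN1r //.
Qed.

Lemma lin_sum f (I : Type) (s : seq I) (F : I -> L) : lin f ->
  f (\sum_(i <- s) F i) = \sum_(i <- s) f (F i).
Proof.
move=> lf; elim: s => [|a s IH]; first by rewrite !big_nil lin0.
by rewrite !big_cons linD // IH.
Qed.

Lemma coeff_lin f (p : L) x : lin f ->
  coeff x (f p) = \sum_(m <- dom p) coeff m p * coeff x (f (mono m)).
Proof.
move=> lf; rewrite -{1}(freeg_sumE p) lin_sum // raddf_sum /=.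
by apply: eq_bigr => m _; rewrite freegU_scale linZ // coeffZ.
Qed.

Lemma lin_ext f h : lin f -> lin h -> (forall m, f (mono m) = h (mono m)) ->
  forall p, f p = h p.
Proof.
move=> lf lh e p; apply/eqP/freeg_eqP => x.
by rewrite !coeff_lin //; apply: eq_bigr => m _; rewrite e.
Qed.

Lemma coeff_lmulr (p q : L) x :
  coeff x (lmul p q) = \sum_(k <- dom p) coeff k p * coeff (x - k) q.
Proof.
rewrite coeff_lmul; apply: eq_bigr => k _.
under eq_bigr => l _ do rewrite -mulrA.
rewrite -big_distrr /=; congr (_ * _).
have E : forall l : expo, (k + l == x) = (l == x - k).
  by move=> l; apply/eqP/eqP => [<-|->]; [rewrite addrC addKr | rewrite addrC subrK].
under eq_bigr => l _ do rewrite E.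
exact: sum_dom_coeff1.
Qed.

Lemma coeff_lmull (p q : L) x :
  coeff x (lmul p q) = \sum_(l <- dom q) coeff (x - l) p * coeff l q.
Proof.
rewrite coeff_lmul exchange_big /=; apply: eq_bigr => l _.
under eq_bigr => k _ do rewrite -mulrA [coeff l q * _]mulrC mulrA.
rewrite -big_distrl /=; congr (_ * _).
have E : forall k : expo, (k + l == x) = (k == x - l).
  by move=> k; apply/eqP/eqP => [<-|->]; [rewrite addrK | rewrite subrK].
under eq_bigr => k _ do rewrite E.
exact: sum_dom_coeff1.
Qed.

Lemma lmul_monol a (q : L) x : coeff x (lmul (mono a) q) = coeff (x - a) q.
Proof. by rewrite coeff_lmulr /mono domU1 big_seq1 coeff_mono eqxx mul1r. Qed.

Lemma lmul_monor a (q : L) x : coeff x (lmul q (mono a)) = coeff (x - a) q.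
Proof. by rewrite coeff_lmull /mono domU1 big_seq1 coeff_mono eqxx mulr1. Qed.

Lemma lmul_mono a b : lmul (mono a) (mono b) = mono (a + b).
Proof.
apply/eqP/freeg_eqP => x; rewrite lmul_monol !coeff_mono.
have E : forall l : expo, (l == x - a) = (a + l == x).
  by move=> l; apply/eqP/eqP => [->|<-]; [rewrite addrC subrK | rewrite addrC addKr].
by rewrite E.
Qed.

Lemma lmul_linl (w : L) a u v :
  lmul (a *: u + v) w = a *: lmul u w + lmul v w.
Proof.
apply/eqP/freeg_eqP => x; rewrite coeffD coeffZ !coeff_lmull mulr_sumr -big_split /=.
by apply: eq_bigr => l _; rewrite coeffD coeffZ; ring.
Qed.

Lemma lmul_linr (w : L) a u v :
  lmul w (a *: u + v) = a *: lmul w u + lmul w v.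
Proof.
apply/eqP/freeg_eqP => x; rewrite coeffD coeffZ !coeff_lmulr mulr_sumr -big_split /=.
by apply: eq_bigr => l _; rewrite coeffD coeffZ; ring.
Qed.

Lemma lmulDl (w u v : L) : lmul (u + v) w = lmul u w + lmul v w.
Proof. by rewrite -{1}[u]scale1r lmul_linl scale1r. Qed.
Lemma lmulDr (w u v : L) : lmul w (u + v) = lmul w u + lmul w v.
Proof. by rewrite -{1}[u]scale1r lmul_linr scale1r. Qed.
Lemma lmulZl (w : L) a u : lmul (a *: u) w = a *: lmul u w.
Proof.
apply/eqP/freeg_eqP => x; rewrite coeffZ !coeff_lmull mulr_sumr.
by apply: eq_bigr => l _; rewrite coeffZ mulrA.
Qed.
Lemma lmulZr (w : L) a u : lmul w (a *: u) = a *: lmul w u.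
Proof.
apply/eqP/freeg_eqP => x; rewrite coeffZ !coeff_lmulr mulr_sumr.
by apply: eq_bigr => l _; rewrite coeffZ mulrCA.
Qed.

Ltac vec := apply/matrixP => ? ?; rewrite !mxE; ring.

Definition ee (i : 'I_n) : expo := delta_mx i ord0.

Lemma lmul_mono0r (q : L) : lmul q (mono 0) = q.
Proof. by apply/eqP/freeg_eqP => x; rewrite lmul_monor subr0. Qed.

Lemma der_lin D : is_derivation D -> lin D.
Proof. by case. Qed.

Lemma der_mono0 D : is_derivation D -> D (mono 0) = 0.
Proof.
move=> [l dD]; have h := dD (mono 0) (mono 0).
rewrite lmul_mono addr0 lmul_mono0r in h.
have h2 : lmul (mono 0) (D (mono 0)) = D (mono 0).
  by apply/eqP/freeg_eqP => x; rewrite lmul_monol subr0.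
rewrite h2 in h.
have : D (mono 0) - D (mono 0) = D (mono 0) + D (mono 0) - D (mono 0) by rewrite -h.
by rewrite subrr addrK => <-.
Qed.

Lemma Z_invariant (G : expo -> K) :
  (forall k j, G (k + ee j) = G k) -> forall k, G k = G 0.
Proof.
move=> GI.
have s1 : forall k j (m : nat), G (k + ee j *+ m) = G k.
  move=> k j; elim=> [|m IH]; first by rewrite mulr0n addr0.
  by rewrite mulrSr addrA GI.
have s2 : forall k j (m : nat), G (k - ee j *+ m) = G k.
  by move=> k j m; rewrite -{2}[k](subrK (ee j *+ m)) s1.
have s3 : forall k j (z : int), G (k + ee j *~ z) = G k.
  move=> k j [] m; first by rewrite -pmulrn s1.
  by rewrite NegzE mulrNz -pmulrn s2.
have s4 : forall (s : seq 'I_n) (a : 'I_n -> int),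
    G (\sum_(j <- s) ee j *~ a j) = G 0.
  move=> s a; elim: s => [|j s IH]; first by rewrite big_nil.
  by rewrite big_cons addrC s3.
move=> k; rewrite -(s4 (enum 'I_n) (fun j => k j ord0)); congr G.
apply/matrixP => i z; rewrite (ord1 z) summxE.
rewrite (big_nth i) /= size_enum_ord big_mkord (bigD1 i) //= big1 ?addr0.
  by rewrite nth_ord_enum -scaler_int intz !mxE !eqxx mulr1.
move=> j nj; rewrite nth_ord_enum -scaler_int intz !mxE.
by rewrite eq_sym (negPf nj) mulr0.
Qed.

Lemma ee_entry (j i : 'I_n) : ee j i ord0 = (j == i)%:R.
Proof. by rewrite mxE eqxx andbT eq_sym. Qed.

Lemma sum_ord_delta (j : 'I_n) (f : 'I_n -> K) :
  \sum_i ((ee j i ord0)%:~R * f i) = f j.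
Proof.
rewrite (bigD1 j) //= big1 ?addr0; first by rewrite ee_entry eqxx mul1r.
by move=> i ni; rewrite ee_entry eq_sym (negPf ni) mul0r.
Qed.

Lemma der_coeff D (dD : is_derivation D) k x :
  coeff x (D (mono k)) =
  \sum_i (k i ord0)%:~R * coeff (ee i + (x - k)) (D (mono (ee i))).
Proof.
set c := x - k.
pose F k' := coeff (k' + c) (D (mono k')).
pose G k' := F k' - \sum_i (k' i ord0)%:~R * F (ee i).
have FS : forall k' j, F (k' + ee j) = F k' + F (ee j).
  move=> k' j; rewrite /F -lmul_mono (proj2 dD) coeffD lmul_monor lmul_monol.
  have -> : k' + ee j + c - ee j = k' + c by vec.
  have -> : k' + ee j + c - k' = ee j + c by vec.
  by [].
have GI : forall k' j, G (k' + ee j) = G k'.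
  move=> k' j; rewrite /G FS.
  under eq_bigr => i _ do rewrite mxE intrD mulrDl.
  rewrite big_split /= sum_ord_delta; ring.
have h := Z_invariant GI k; rewrite /G in h.
have e0 : \sum_i ((0 : expo) i ord0)%:~R * F (ee i) = 0.
  by apply: big1 => i _; rewrite mxE mul0r.
have f0 : F 0 = 0 by rewrite /F der_mono0 // coeff0.
rewrite e0 f0 subr0 in h.
move/eqP: h; rewrite subr_eq0 => /eqP; rewrite /F.
have -> : k + c = x by rewrite /c; vec.
by [].
Qed.

Definition adf (g f : L -> L) : L -> L := fun p => g (f p) - f (g p).

Lemma lin_adf g f : lin g -> lin f -> lin (adf g f).
Proof.
move=> lg lf a u v; rewrite /adf lf lg lg lf.
rewrite scalerBr; by rewrite addrACA opprD.
Qed.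

Definition phi (w : 'I_n -> int) (c : expo) : int := \sum_i w i * c i ord0.

Lemma phiD w a b : phi w (a + b) = phi w a + phi w b.
Proof. by rewrite /phi -big_split /=; apply: eq_bigr => i _; rewrite mxE mulrDr. Qed.

Lemma phiN w a : phi w (- a) = - phi w a.
Proof. by rewrite /phi -sumrN; apply: eq_bigr => i _; rewrite mxE mulrN. Qed.

Lemma phi0 w : phi w 0 = 0.
Proof. by rewrite /phi big1 // => i _; rewrite mxE mulr0. Qed.

Lemma phiB w a b : phi w (a - b) = phi w a - phi w b.
Proof. by rewrite phiD phiN. Qed.

Definition Bnd w (f : L -> L) (t : int) :=
  forall k x, coeff x (f (mono k)) != 0 -> phi w (x - k) <= t.

Lemma sum_neq0 (I : eqType) (s : seq I) (F : I -> K) :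
  \sum_(i <- s) F i != 0 -> exists2 i, i \in s & F i != 0.
Proof.
move=> ns; have : has (fun i => F i != 0) s.
  apply/negPn/negP => /hasPn H; move: ns; rewrite big1_seq ?eqxx //.
  by move=> i /= /H; rewrite negbK => /eqP.
by move/hasP.
Qed.

Lemma Bnd_le w f t t' : Bnd w f t -> t <= t' -> Bnd w f t'.
Proof. by move=> B le k x /B h; apply: le_trans le. Qed.

Lemma Bnd_comp w f h t1 t2 : lin f -> Bnd w f t1 -> Bnd w h t2 ->
  Bnd w (fun p => f (h p)) (t1 + t2).
Proof.
move=> lf Bf Bh k x; rewrite coeff_lin // => /sum_neq0 [m _].
rewrite mulf_eq0 negb_or => /andP [h1 h2].
have H2 := Bf _ _ h2; have H1 := Bh _ _ h1.
have -> : x - k = (x - m) + (m - k) by vec.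
rewrite phiD; lia.
Qed.

Lemma Bnd_add w f h t : Bnd w f t -> Bnd w h t -> Bnd w (fun p => f p + h p) t.
Proof.
move=> Bf Bh k x; rewrite coeffD; case: (eqVneq (coeff x (f (mono k))) 0) => [->|/Bf //].
by rewrite add0r => /Bh.
Qed.

Lemma Bnd_scale w f a t : Bnd w f t -> Bnd w (fun p => a *: f p) t.
Proof. by move=> Bf k x; rewrite coeffZ mulf_eq0 negb_or => /andP [_ /Bf]. Qed.

Lemma Bnd_sub w f h t : Bnd w f t -> Bnd w h t -> Bnd w (fun p => f p - h p) t.
Proof.
move=> Bf Bh; apply: Bnd_add => // k x; rewrite coeffN oppr_eq0; exact: Bh.
Qed.

Lemma Bnd_ad w g f t1 t2 : lin g -> lin f -> Bnd w g t1 -> Bnd w f t2 ->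
  Bnd w (adf g f) (t1 + t2).
Proof.
move=> lg lf Bg Bf; apply: Bnd_sub; first exact: Bnd_comp.
rewrite addrC; exact: Bnd_comp.
Qed.

Lemma Bnd_coeff0 w f t k x : Bnd w f t -> t < phi w (x - k) ->
  coeff x (f (mono k)) = 0.
Proof.
move=> Bf lt; apply/eqP; apply/negP => /negP /Bf h.
by move: (lt_le_trans lt h); rewrite ltxx.
Qed.

Definition dot (w : 'I_n -> K) (m : expo) : K := \sum_i w i * (m i ord0)%:~R.

Lemma dotD w a b : dot w (a + b) = dot w a + dot w b.
Proof. by rewrite /dot -big_split /=; apply: eq_bigr => i _; rewrite mxE intrD mulrDr. Qed.

Lemma dotN w a : dot w (- a) = - dot w a.
Proof. by rewrite /dot -sumrN; apply: eq_bigr => i _; rewrite mxE intrN mulrN. Qed.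

Lemma dotB w a b : dot w (a - b) = dot w a - dot w b.
Proof. by rewrite dotD dotN. Qed.

Definition Tm (c : expo) (w : 'I_n -> K) (p : L) : L :=
  \sum_(m <- dom p) << coeff m p * dot w m *g (m + c) >>.

Lemma coeff_Tm c w p x : coeff x (Tm c w p) = coeff (x - c) p * dot w (x - c).
Proof.
rewrite /Tm raddf_sum /=.
under eq_bigr => m _ do rewrite coeffU.
have E : forall m : expo, (m + c == x) = (m == x - c).
  by move=> m; apply/eqP/eqP => [<-|->]; [rewrite addrK | rewrite subrK].
under eq_bigr => m _ do rewrite E.
exact: sum_dom_coeff.
Qed.

Lemma lin_Tm c w : lin (Tm c w).
Proof.
move=> a u v; apply/eqP/freeg_eqP => x.
by rewrite coeffD coeffZ !coeff_Tm coeffD coeffZ; ring.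
Qed.

Lemma coeff_Tm_mono c w k x :
  coeff x (Tm c w (mono k)) = dot w k * (k + c == x)%:R.
Proof.
rewrite coeff_Tm coeff_mono.
have E : (k == x - c) = (k + c == x).
  by apply/eqP/eqP => [->|<-]; [rewrite subrK | rewrite addrK].
rewrite E; case: eqP => [<-|_]; first by rewrite addrK mul1r mulr1.
by rewrite mul0r mulr0.
Qed.

Lemma Tm_der c w : is_derivation (Tm c w).
Proof.
split; first exact: lin_Tm.
move=> u v; apply/eqP/freeg_eqP => x.
rewrite coeffD coeff_Tm [coeff (x - c) _]coeff_lmulr.
rewrite [coeff x (lmul (Tm _ _ u) v)]coeff_lmull [coeff x (lmul u _)]coeff_lmulr.
under [X in _ = X + _]eq_bigr => l _ do rewrite coeff_Tm.
under [X in _ = _ + X]eq_bigr => k _ do rewrite coeff_Tm.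
have E1 : forall k l : expo, (l == x - k - c) = (k + l == x - c).
  move=> k l; apply/eqP/eqP => H; first by rewrite H; vec.
  have -> : x = (k + l) + c by rewrite H subrK.
  vec.
have E2 : forall k l : expo, (k == x - l - c) = (k + l == x - c).
  move=> k l; apply/eqP/eqP => H; first by rewrite H; vec.
  have -> : x = (k + l) + c by rewrite H subrK.
  vec.
have E3 : forall k l : expo, (l == x - c - k) = (k + l == x - c).
  move=> k l; rewrite -E1; congr (_ == _); vec.
have S0 : forall k, coeff (x - c - k) v =
    \sum_(l <- dom v) coeff l v * (k + l == x - c)%:R.
  by move=> k; under eq_bigr => l _ do rewrite -E3; rewrite sum_dom_coeff1.
have S1 : forall k, coeff (x - k - c) v * dot w (x - k - c) =
    \sum_(l <- dom v) coeff l v * dot w l * (k + l == x - c)%:R.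
  by move=> k; under eq_bigr => l _ do rewrite -E1; rewrite sum_dom_coeff.
have S2 : forall l, coeff (x - l - c) u * dot w (x - l - c) =
    \sum_(k <- dom u) coeff k u * dot w k * (k + l == x - c)%:R.
  by move=> l; under eq_bigr => k _ do rewrite -E2; rewrite sum_dom_coeff.
under [X in _ = _ + X]eq_bigr => k _ do rewrite S1 mulr_sumr.
under [X in _ = X + _]eq_bigr => l _ do rewrite S2 mulr_suml.
rewrite [X in X = _]big_distrl /=.
under [X in X = _]eq_bigr => k _ do rewrite S0 mulr_sumr mulr_suml.
rewrite [X in _ = X + _]exchange_big /= -big_split /=.
apply: eq_bigr => k _; rewrite -big_split /=; apply: eq_bigr => l _ /=.
case: eqP => [e|_]; last by rewrite !mulr0 ?mul0r ?add0r ?addr0.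
by rewrite -e dotD; ring.
Qed.

Lemma Bnd_Tm w' c w : Bnd w' (Tm c w) (phi w' c).
Proof.
move=> k x; rewrite coeff_Tm_mono; case: (k + c =P x) => [<-|_]; last by rewrite mulr0 eqxx.
by move=> _; have -> : k + c - k = c by vec.
Qed.

Lemma ad_Tm M u c v p :
  adf (Tm M u) (Tm c v) p =
  Tm (M + c) (fun i => dot u c * v i - dot v M * u i) p.
Proof.
apply/eqP/freeg_eqP => x; rewrite /adf coeffB !coeff_Tm.
have -> : x - M - c = x - (M + c) by vec.
have -> : x - c - M = x - (M + c) by vec.
have -> : x - M = x - (M + c) + c by vec.
have -> : x - c = x - (M + c) + M by vec.
set z := x - (M + c); clearbody z.
rewrite !dotD.
have -> : dot (fun i => dot u c * v i - dot v M * u i) z =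
   dot u c * dot v z - dot v M * dot u z.
  rewrite /dot mulr_sumr mulr_sumr -sumrB; apply: eq_bigr => i _; ring.
ring.
Qed.

Lemma Hop_mono i k : Hop i (mono k) = (k i ord0)%:~R *: mono k.
Proof.
apply/eqP/freeg_eqP => x; rewrite coeff_Hop coeffZ !coeff_mono.
by case: eqP => [->|_]; rewrite ?mulr1 ?mul1r ?mulr0 ?mul0r.
Qed.

Lemma lin_Hop i : lin (Hop i).
Proof. by case: (Hop_der K i). Qed.

Lemma coeff_adHop i f k x : lin f ->
  coeff x (adf (Hop i) f (mono k)) = ((x - k) i ord0)%:~R * coeff x (f (mono k)).
Proof.
move=> lf; rewrite /adf coeffB coeff_Hop Hop_mono linZ // coeffZ !mxE intrB.
ring.
Qed.

Lemma lin_iter g f j : lin g -> lin f -> lin (iter j (adf g) f).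
Proof. by move=> lg lf; elim: j => [|j IH] //=; exact: lin_adf. Qed.

Lemma coeff_iterHop i f j k x : lin f ->
  coeff x (iter j (adf (Hop i)) f (mono k)) =
  ((x - k) i ord0)%:~R ^+ j * coeff x (f (mono k)).
Proof.
move=> lf; elim: j => [|j IH] /=; first by rewrite expr0 mul1r.
by rewrite coeff_adHop ?IH ?exprS ?mulrA //; apply: lin_iter => //; exact: lin_Hop.
Qed.

Definition polyad (P : {poly K}) (g f : L -> L) (p : L) : L :=
  \sum_(j < size P) P`_j *: iter j (adf g) f p.

Lemma lin_sumf (m : nat) (F : 'I_m -> L -> L) :
  (forall j, lin (F j)) -> lin (fun p => \sum_(j < m) F j p).
Proof.
move=> lF a u v; rewrite scaler_sumr -big_split /=.
by apply: eq_bigr => j _; rewrite lF.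
Qed.

Lemma lin_polyad P g f : lin g -> lin f -> lin (polyad P g f).
Proof.
move=> lg lf; rewrite /polyad.
apply: (@lin_sumf (size P) (fun (j : 'I_(size P)) p => P`_j *: iter j (adf g) f p)) => j a u v.
by rewrite lin_iter // scalerDr !scalerA mulrC.
Qed.

Definition supp_der (D : L -> L) : seq expo :=
  flatten [seq [seq m - ee l | m <- dom (D (mono (ee l)))] | l <- enum 'I_n].

Lemma supp_derP D k x : is_derivation D -> coeff x (D (mono k)) != 0 ->
  x - k \in supp_der D.
Proof.
move=> dD; rewrite der_coeff // => /sum_neq0 [l _].
rewrite mulf_eq0 negb_or => /andP [_ h].
apply/flattenP; exists [seq m - ee l | m <- dom (D (mono (ee l)))].
  by apply/mapP; exists l; rewrite ?mem_enum.
apply/mapP; exists (ee l + (x - k)); first by rewrite mem_dom.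
vec.
Qed.

Lemma Hop_annihil i D : is_derivation D ->
  exists P : {poly K}, P \is monic /\ forall p, polyad P (Hop i) D p = 0.
Proof.
move=> dD.
exists (\prod_(a <- [seq ((c : expo) i ord0)%:~R : K | c <- supp_der D]) ('X - a%:P)); split.
  exact: monic_prod_XsubC.
have lD := der_lin dD.
apply: (lin_ext (f := polyad _ (Hop i) D) (h := fun _ => 0)).
- by apply: lin_polyad => //; exact: lin_Hop.
- by move=> a u v; rewrite scaler0 addr0.
move=> k; apply/eqP/freeg_eqP => x; rewrite coeff0 /polyad raddf_sum /=.
under eq_bigr => j _ do rewrite coeffZ coeff_iterHop // mulrA.
rewrite -big_distrl /= -horner_coef.
case: (eqVneq (coeff x (D (mono k))) 0) => [->|nz]; first by rewrite mulr0.
have : root (\prod_(a <- [seq ((c : expo) i ord0)%:~R : K | c <- supp_der D]) ('X - a%:P))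
           (((x - k) i ord0)%:~R).
  rewrite root_prod_XsubC.
  by apply/mapP; exists (x - k) => //; exact: supp_derP.
by move/rootP => ->; rewrite mul0r.
Qed.

Lemma baseN (N : int) (m : nat) (d : 'I_m -> int) :
  (forall i, `|d i| < N) -> \sum_(i < m) N ^+ i * d i = 0 -> forall i, d i = 0.
Proof.
elim: m d => [|m IH] d bd sz i; first by case: i.
have N0 : 0 < N by apply: le_lt_trans (bd ord0); exact: normr_ge0.
rewrite big_ord_recl /= expr0 mul1r in sz.
set r := \sum_(i < m) _ in sz.
have rE : r = N * \sum_(i < m) N ^+ i * d (fintype.lift ord0 i).
  rewrite /r mulr_sumr; apply: eq_bigr => j _.
  by rewrite /bump /= add1n exprS mulrA.
set t := \sum_(i < m) _ in rE.
have d0 : d ord0 = - (N * t) by rewrite -rE; apply/eqP; rewrite -subr_eq0 opprK sz.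
have t0 : t = 0.
  apply/eqP; apply/negP => nt; have := bd ord0; rewrite d0 normrN normrM.
  have : 0 < `|t| by rewrite normr_gt0; exact/negP.
  rewrite gtr0_norm //; nia.
have IH' := IH (fun j => d (fintype.lift ord0 j)) (fun j => bd _) t0.
case: (unliftP ord0 i) => [j ->|->]; first exact: IH'.
by rewrite d0 t0 mulr0 oppr0.
Qed.

Lemma le_sum_mem (s : seq expo) (F : expo -> int) x :
  (forall y, 0 <= F y) -> x \in s -> F x <= \sum_(y <- s) F y.
Proof.
move=> F0; elim: s => [|a s IH] //; rewrite inE big_cons => /orP [/eqP ->|/IH h].
  by rewrite lerDl sumr_ge0.
by apply: (le_trans h); rewrite lerDr.
Qed.

Lemma argmax (f : expo -> int) (S : seq expo) : S != [::] ->
  {in S &, injective f} ->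
  exists2 M, M \in S & forall c, c \in S -> c != M -> f c < f M.
Proof.
elim: S => [|a s IH] // _ inj.
case: (eqVneq s [::]) => [-> | ns].
  by exists a; rewrite ?inE // => c; rewrite inE => ->.
have inj' : {in s &, injective f}.
  by move=> x y xs ys; apply: inj; rewrite inE ?xs ?ys orbT.
have [M Ms HM] := IH ns inj'.
case: (ltP (f M) (f a)) => h.
  exists a; first by rewrite inE eqxx.
  move=> c; rewrite inE => /orP [/eqP -> | cs]; first by rewrite eqxx.
  move=> ca; case: (eqVneq c M) => [-> //|cM].
  exact: lt_trans (HM c cs cM) h.
exists M; first by rewrite inE Ms orbT.
move=> c; rewrite inE => /orP [/eqP -> | cs] cM; last exact: HM.
rewrite lt_neqAle h andbT; apply/eqP => e; move: cM; rewrite (inj a M) ?eqxx //.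
  by rewrite inE eqxx.
by rewrite inE Ms orbT.
Qed.

Lemma phi_inj (S : seq expo) : exists w, {in S &, injective (phi w)}.
Proof.
pose B := \sum_(c <- S) \sum_i `|c i ord0|.
pose N : int := B *+ 2 + 1.
exists (fun i : 'I_n => N ^+ i) => c c' cS c'S e.
have bnd : forall x, x \in S -> forall i, `|x i ord0| <= B.
  move=> x xS i.
  have F0 : forall y : expo, 0 <= \sum_i `|y i ord0| by move=> y; apply: sumr_ge0.
  have h := le_sum_mem F0 xS.
  apply: le_trans h; by rewrite (bigD1 i) //= lerDl sumr_ge0.
have := @baseN N n (fun i => c i ord0 - c' i ord0).
have Hd : forall i, `|c i ord0 - c' i ord0| < N.
  move=> i; have h1 := bnd _ cS i; have h2 := bnd _ c'S i.
  apply: le_lt_trans (ler_normB _ _) _; rewrite /N; lia.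
move/(_ Hd) => H.
have : \sum_(i < n) N ^+ i * (c i ord0 - c' i ord0) = 0.
  by rewrite -[RHS](subrr (phi (fun i => N ^+ i) c)) {2}e /phi -sumrB;
    apply: eq_bigr => i _; rewrite mulrBr.
move/H => {}H; apply/matrixP => i j; rewrite (ord1 j); apply/eqP.
by rewrite -subr_eq0 H.
Qed.

Lemma top_choice (S : seq expo) M0 : M0 \in S -> M0 != 0 ->
  exists w M, [/\ M \in S, 0 < phi w M &
                  forall c, c \in S -> c != M -> phi w c < phi w M].
Proof.
move=> M0S nM0.
have [w inj] := phi_inj (0 :: S).
have injS : forall w', (forall c, phi w' c = - phi w c) -> {in 0 :: S &, injective (phi w')}.
  move=> w' e x y xs ys; rewrite !e => /eqP; rewrite eqr_opp => /eqP; exact: inj.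
have nS : S != [::] by apply/eqP => S0; rewrite S0 in M0S.
have sub : forall x, x \in S -> x \in 0 :: S by move=> x xS; rewrite inE xS orbT.
have pM0 : phi w M0 != 0.
  apply/eqP => e; move: nM0; rewrite -(inj M0 0) ?eqxx ?inE ?eqxx ?M0S ?orbT //.
  by rewrite e phi0.
have [M MS HM] := argmax nS (fun x y xs ys => inj x y (sub x xs) (sub y ys)).
case: (ltP 0 (phi w M)) => h; first by exists w, M; split.
have hM0 : phi w M0 < 0.
  case: (eqVneq M0 M) => [e|ne]; first by rewrite lt_neqAle pM0 e h.
  by apply: lt_le_trans (HM _ M0S ne) h.
pose w' := fun i => - w i.
have e' : forall c, phi w' c = - phi w c.
  by move=> c; rewrite /phi -sumrN; apply: eq_bigr => i _; rewrite mulNr.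
have inj' := injS w' e'.
have [M' MS' HM'] := argmax nS (fun x y xs ys => inj' x y (sub x xs) (sub y ys)).
exists w', M'; split => //.
case: (eqVneq M0 M') => [<-|ne]; first by rewrite e' oppr_gt0.
by apply: lt_trans (HM' _ M0S ne); rewrite e' oppr_gt0.
Qed.

Lemma dot_ext w w' m : (forall i, w i = w' i) -> dot w m = dot w' m.
Proof. by move=> e; apply: eq_bigr => i _; rewrite e. Qed.

Lemma Tm_ext c w w' p : (forall i, w i = w' i) -> Tm c w p = Tm c w' p.
Proof. by move=> e; apply/eqP/freeg_eqP => x; rewrite !coeff_Tm (dot_ext _ e). Qed.

Lemma dot_scale a w m : dot (fun i => a * w i) m = a * dot w m.
Proof. by rewrite /dot mulr_sumr; apply: eq_bigr => i _; rewrite mulrA. Qed.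

Lemma dotMn w m j : dot w (m *+ j) = j%:R * dot w m.
Proof.
elim: j => [|j IH]; first by rewrite mulr0n mul0r /dot big1 // => i _; rewrite mxE mulr0.
by rewrite mulrS dotD IH mulrS mulrDl mul1r.
Qed.

Lemma phiMn w m j : phi w (m *+ j) = phi w m *+ j.
Proof.
elim: j => [|j IH]; first by rewrite !mulr0n phi0.
by rewrite !mulrS phiD IH.
Qed.

Lemma dot_ee w l : dot w (ee l) = w l.
Proof.
rewrite /dot; under eq_bigr => i _ do rewrite mulrC.
exact: sum_ord_delta.
Qed.

Lemma Bnd_ext w f h t : (forall p, f p = h p) -> Bnd w h t -> Bnd w f t.
Proof. by move=> e B k x; rewrite e; apply: B. Qed.

Lemma lin_sub f h : lin f -> lin h -> lin (fun p => f p - h p).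
Proof.
move=> lf lh a u v; rewrite lf lh scalerBr opprD addrACA //.
Qed.

Lemma lin_Tm' c w : lin (Tm c w).
Proof. exact: lin_Tm. Qed.

Lemma diag_of_locfin (charK : [pchar K] =i pred0) g : is_derivation g ->
  (forall c w, exists P : {poly K}, P \is monic /\ forall p, polyad P g (Tm c w) p = 0) ->
  forall k x, x != k -> coeff x (g (mono k)) = 0.
Proof.
move=> dg loc k1 x1 nx; apply/eqP; apply/negP => /negP nz.
have lg := der_lin dg.
pose uu (c : expo) : 'I_n -> K := fun l => coeff (ee l + c) (g (mono (ee l))).
have gE : forall k x, coeff x (g (mono k)) = dot (uu (x - k)) k.
  by move=> k x; rewrite der_coeff //; apply: eq_bigr => i _; rewrite mulrC.
pose S' := [seq c <- supp_der g | [exists l, uu c l != 0]].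
have memS' : forall k x, coeff x (g (mono k)) != 0 -> x - k \in S'.
  move=> k x h; rewrite mem_filter supp_derP // andbT.
  move: h; rewrite gE /dot => /sum_neq0 [l _]; rewrite mulf_eq0 negb_or => /andP [h _].
  by apply/existsP; exists l.
have nM0 : x1 - k1 != 0 by rewrite subr_eq0.
have [w [M [MS pM HM]]] := top_choice (memS' _ _ nz) nM0.
set u := uu M.
have [l0 nl0] : exists l, u l != 0.
  by move: MS; rewrite mem_filter => /andP [/existsP [l h] _]; exists l.
set mu := dot u M.
have [b [k0 [Hb Hk0]]] : exists b k0,
    (forall j : nat, dot u b + j%:R * mu - mu != 0) /\ dot u k0 != 0.
  case: (eqVneq mu 0) => [m0|m0].
    exists (ee l0), (ee l0); split; last by rewrite dot_ee.
    by move=> j; rewrite dot_ee m0 mulr0 addr0 subr0.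
  exists (M *+ 2), M; split => // j.
  have -> : dot u (M *+ 2) + j%:R * mu - mu = (j.+1)%:R * mu.
    by rewrite dotMn -/mu mulrS mulrS (mulrS 1 j); ring.
  rewrite mulf_neq0 //; have := (pcharf0P K).1 charK j.+1; by move=> ->.
pose y := Tm b u.
have [P [mP HP]] := loc b u.
pose r := (size P).-1.
pose alpha j := \prod_(i < j) (dot u b + i%:R * mu - mu).
pose Y j := Tm (b + M *+ j) (fun l => alpha j * u l).
pose t j : int := phi w b + phi w M *+ j.
have Bg : Bnd w g (phi w M).
  move=> k x /memS' h; case: (eqVneq (x - k) M) => [->|ne]; first by [].
  by apply: ltW; apply: HM.
have Bgt : Bnd w (fun p => g p - Tm M u p) (phi w M - 1).
  move=> k x; rewrite coeffB gE coeff_Tm_mono.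
  case: (eqVneq (x - k) M) => [e|ne].
    have -> : (k + M == x) = true by apply/eqP; rewrite -e; vec.
    by rewrite e mulr1 /u subrr eqxx.
  have -> : (k + M == x) = false.
    by apply/negbTE; apply: contra ne => /eqP <-; apply/eqP; vec.
  rewrite mulr0 subr0 -gE => /memS' h.
  have := HM _ h ne; lia.
have lin_it : forall j, lin (iter j (adf g) y).
  by move=> j; apply: lin_iter => //; exact: lin_Tm.
have B1 : forall j, Bnd w (iter j (adf g) y) (t j).
  elim=> [|j IH] /=.
    apply: (@Bnd_le _ _ (phi w b)); first exact: Bnd_Tm.
    by rewrite /t mulr0n addr0.
  have := Bnd_ad lg (lin_it j) Bg IH.
  by move/Bnd_le; apply; rewrite /t mulrS; lia.
have YS : forall j p, adf (Tm M u) (Y j) p = Y j.+1 p.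
  move=> j p; rewrite /Y ad_Tm.
  have -> : M + (b + M *+ j) = b + M *+ j.+1 by rewrite mulrS; vec.
  have aS : alpha j.+1 = alpha j * (dot u b + j%:R * mu - mu) by rewrite /alpha big_ord_recr.
  apply: Tm_ext => l; rewrite dotD dotMn dot_scale -/mu aS.
  move: (alpha j) (dot u b) (u l) => A D U; clear; ring.
have B2 : forall j, Bnd w (fun p => iter j (adf g) y p - Y j p) (t j - 1).
  elim=> [|j IH].
    move=> k x /=; rewrite (_ : y (mono k) - Y 0 (mono k) = 0) ?coeff0 ?eqxx //.
    rewrite /y /Y (@Tm_ext _ (fun l => alpha 0 * u l) u); last first.
      by move=> l; rewrite /alpha big_ord0 mul1r.
    by rewrite mulr0n addr0 subrr.
  pose E := fun p => iter j (adf g) y p - Y j p.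
  have lE : lin E by apply: lin_sub => //; exact: lin_Tm.
  have lY : lin (Y j) by exact: lin_Tm.
  apply: (@Bnd_ext _ _ (fun p => adf g E p + adf (fun q => g q - Tm M u q) (Y j) p)).
    move=> p; rewrite -YS.
    have -> : iter j.+1 (adf g) y p = g (iter j (adf g) y p) - iter j (adf g) y (g p) by [].
    rewrite [X in _ = X + _]/adf [X in _ = _ + X]/adf /E (linB lg) (linB lY).
    rewrite [adf (Tm M u) _ _]/adf; apply/eqP/freeg_eqP => x; rewrite !(coeffD, coeffB, coeffN); ring.
  apply: Bnd_add.
    apply: (Bnd_le (Bnd_ad lg lE Bg IH)); rewrite /t mulrS; lia.
  have lgt : lin (fun q => g q - Tm M u q) by apply: lin_sub => //; exact: lin_Tm.
  have BY : Bnd w (Y j) (t j) by rewrite /t -phiMn -phiD; exact: Bnd_Tm.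
  apply: (Bnd_le (Bnd_ad lgt lY Bgt BY)); rewrite /t mulrS; lia.
have sP : size P = r.+1 by rewrite /r prednK // size_poly_gt0 monic_neq0.
pose z := k0 + (b + M *+ r).
have zE : phi w (z - k0) = t r by rewrite /z /t (_ : k0 + (b + M *+ r) - k0 = b + M *+ r); [rewrite phiD phiMn | vec].
have F0 : forall j, (j < r)%N -> coeff z (iter j (adf g) y (mono k0)) = 0.
  move=> j jr; apply: (Bnd_coeff0 (B1 j)); rewrite zE /t ltrD2l ltr_pMn2l //.
have Fr : coeff z (iter r (adf g) y (mono k0)) = alpha r * dot u k0.
  have := Bnd_coeff0 (x := z) (k := k0) (B2 r); rewrite zE ltrBlDr ltrDl ltr01.
  move/(_ isT)/eqP; rewrite coeffB subr_eq0 => /eqP ->.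
  by rewrite /Y coeff_Tm_mono dot_scale eqxx mulr1.
have nzF : alpha r * dot u k0 != 0.
  rewrite mulf_neq0 //; apply/prodf_neq0 => i _; exact: Hb.
have := HP (mono k0); move/(congr1 (coeff z)); rewrite coeff0 /polyad raddf_sum /=.
under eq_bigr => j _ do rewrite coeffZ.
rewrite -(big_mkord xpredT (fun j => P`_j * coeff z (iter j (adf g) y (mono k0)))).
rewrite sP big_nat_recr //= big1_seq ?add0r; last first.
  by move=> j /andP [_]; rewrite mem_index_iota => /andP [_ jr]; rewrite F0 ?mulr0.
have -> : P`_r = 1 by have := monicP mP; rewrite lead_coefE sP.
by rewrite mul1r Fr => /eqP; rewrite (negPf nzF).
Qed.

End Basic.

Section WnSec.
Variables (K : fieldType) (n : nat).
Local Notation L := (laurent K n).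
Local Notation W := (Wn K n).

Lemma lmulBl (w u v : L) : lmul (u - v) w = lmul u w - lmul v w.
Proof.
apply/eqP/freeg_eqP => x; rewrite coeffB !coeff_lmull -sumrB.
by apply: eq_bigr => l _; rewrite coeffB mulrBl.
Qed.

Lemma lmulBr (w u v : L) : lmul w (u - v) = lmul w u - lmul w v.
Proof.
apply/eqP/freeg_eqP => x; rewrite coeffB !coeff_lmulr -sumrB.
by apply: eq_bigr => l _; rewrite coeffB mulrBr.
Qed.

Lemma der_zero : is_derivation (fun _ : L => 0).
Proof.
split; first by move=> a u v; rewrite scaler0 addr0.
by move=> u v; apply/eqP/freeg_eqP => x; rewrite coeffD !coeff_lmulr coeff0 big1 ?add0r //;
  [apply/esym; apply: big1 => k _; rewrite coeff0 mulr0 | move=> k _; rewrite coeff0 mul0r].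
Qed.

Lemma der_comb a (D E : L -> L) : is_derivation D -> is_derivation E ->
  is_derivation (fun p : L => a *: D p + E p).
Proof.
move=> [lD dD] [lE dE]; split.
  move=> b u v; rewrite lD lE.
  by apply/eqP/freeg_eqP => x; rewrite !(coeffD, coeffZ); ring.
move=> u v; rewrite dD dE lmul_linl lmul_linr.
apply/eqP/freeg_eqP => x; rewrite !(coeffD, coeffZ); ring.
Qed.

Lemma der_br (D E : L -> L) : is_derivation D -> is_derivation E ->
  is_derivation (adf D E).
Proof.
move=> dD dE; have lD := der_lin dD; have lE := der_lin dE.
split; first exact: lin_adf.
move=> u v; rewrite /adf (proj2 dE) (proj2 dD) !(linD lD) !(linD lE) !(proj2 dD) !(proj2 dE).
rewrite lmulBl lmulBr.
apply/eqP/freeg_eqP => x; rewrite !(coeffD, coeffB); ring.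
Qed.

Definition zeroW : W := exist _ _ der_zero.
Definition combW a (D E : W) : W := exist _ _ (der_comb a (svalP D) (svalP E)).
Definition brW (D E : W) : W := exist _ _ (der_br (svalP D) (svalP E)).
Definition TW c w : W := exist _ _ (Tm_der c w).

Lemma Wn_ext (D E : W) : (forall p, sval D p = sval E p) -> D = E.
Proof.
move: D E => [f hf] [h hh] /= e.
have ef : f = h by apply: functional_extensionality.
subst h; f_equal; apply: proof_irrelevance.
Qed.

Section Aut.
Variable sigma : W -> W.
Hypothesis comb_s : forall a D E, sigma (combW a D E) = combW a (sigma D) (sigma E).
Hypothesis br_s : forall D E, sigma (brW D E) = brW (sigma D) (sigma E).

Lemma zero_s : sigma zeroW = zeroW.
Proof.
have e : zeroW = combW (-1) zeroW zeroW by apply: Wn_ext => p /=; rewrite scaler0 addr0.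
apply: Wn_ext => p; rewrite {1}e comb_s /= scaleN1r.
by rewrite addNr.
Qed.

Definition iterW j (D E : W) : W := iter j (brW D) E.

Lemma iterW_val j D E p : sval (iterW j D E) p = iter j (adf (sval D)) (sval E) p.
Proof.
elim: j p => [|j IH] p //=; rewrite /adf IH; congr (_ - _); exact: IH.
Qed.

Lemma iter_s j D E : sigma (iterW j D E) = iterW j (sigma D) (sigma E).
Proof. by elim: j => [|j IH] //=; rewrite br_s IH. Qed.

Definition sumW (s : seq (K * W)) : W :=
  foldr (fun az acc => combW az.1 az.2 acc) zeroW s.

Lemma sumW_val s p : sval (sumW s) p = \sum_(az <- s) az.1 *: sval az.2 p.
Proof. by elim: s => [|az s IH] /=; rewrite ?big_nil ?big_cons ?IH. Qed.

Lemma sumW_s s : sigma (sumW s) = sumW [seq (az.1, sigma az.2) | az <- s].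
Proof. by elim: s => [|az s IH] /=; rewrite ?zero_s // comb_s IH. Qed.

Lemma comb_transfer (D : W) (s : seq (K * W)) :
  (forall p, sval D p = \sum_(az <- s) az.1 *: sval az.2 p) ->
  forall p, sval (sigma D) p = \sum_(az <- s) az.1 *: sval (sigma az.2) p.
Proof.
move=> e; have -> : D = sumW s by apply: Wn_ext => p; rewrite sumW_val e.
by move=> p; rewrite sumW_s sumW_val big_map.
Qed.

Lemma polyad_transfer P (h y : W) :
  (forall p, polyad P (sval h) (sval y) p = 0) ->
  forall p, polyad P (sval (sigma h)) (sval (sigma y)) p = 0.
Proof.
move=> e.
pose s := [seq (P`_j, iterW j h y) | j <- iota 0 (size P)].
have E1 : forall p, sval zeroW p = \sum_(az <- s) az.1 *: sval az.2 p.
  move=> p; transitivity (polyad P (sval h) (sval y) p); first by rewrite e.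
  rewrite big_map /polyad.
  rewrite -(big_mkord (fun _ => true) (fun j => P`_j *: iter j (adf (sval h)) (sval y) p)).
  rewrite /index_iota subn0; apply: eq_bigr => j _ /=; by rewrite iterW_val.
have := comb_transfer E1; rewrite zero_s /= => E2 p.
rewrite (E2 p) big_map /polyad.
rewrite -(big_mkord (fun _ => true) (fun j => P`_j *: iter j (adf (sval (sigma h))) (sval (sigma y)) p)).
rewrite /index_iota subn0; apply: eq_bigr => j _ /=; by rewrite iter_s iterW_val.
Qed.
End Aut.
End WnSec.

Section LieSec.
Variables (K : fieldType) (n : nat).
Local Notation mono := (@mono K n).
Local Notation zeroW := (@zeroW K n).
Local Notation L := (laurent K n).
Local Notation W := (Wn K n).

Lemma Lie_comb (sigma : W -> W) : is_Lie_aut sigma ->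
  forall a D E, sigma (combW a D E) = combW a (sigma D) (sigma E).
Proof. by move=> [_ hl _] a D E; apply: Wn_ext => p /=; apply: hl. Qed.

Lemma Lie_br (sigma : W -> W) : is_Lie_aut sigma ->
  forall D E, sigma (brW D E) = brW (sigma D) (sigma E).
Proof. by move=> [_ _ hb] D E; apply: Wn_ext => p /=; apply: hb. Qed.

Lemma Lie_inv (sigma sigma' : W -> W) : is_Lie_aut sigma ->
  cancel sigma sigma' -> cancel sigma' sigma -> is_Lie_aut sigma'.
Proof.
move=> H c1 c2; have hc := Lie_comb H; have hb := Lie_br H; split.
- by exists sigma.
- move=> a D E F e; have -> : F = combW a D E by apply: Wn_ext.
  rewrite -{1}(c2 D) -{1}(c2 E) -hc c1 //.
- move=> D E F e; have -> : F = brW D E by apply: Wn_ext.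
  rewrite -{1}(c2 D) -{1}(c2 E) -hb c1 //.
Qed.

Lemma sigma_diag (charK : [pchar K] =i pred0) (sigma : W -> W) :
  is_Lie_aut sigma ->
  forall i k x, x != k -> coeff x (sval (sigma (@Hw K n i)) (mono k)) = 0.
Proof.
move=> H i; have [[sigma' c1 c2] _ _] := H.
apply: (diag_of_locfin charK (svalP (sigma (@Hw K n i)))) => c w.
pose y := sigma' (TW c w).
have [P [mP hP]] := Hop_annihil i (svalP y).
exists P; split => // p.
have := polyad_transfer (Lie_comb H) (Lie_br H) (h := @Hw K n i) (y := y) hP p.
by rewrite /y c2.
Qed.

Definition Bmat (sigma : W -> W) : 'M[K]_n :=
  \matrix_(i, l) coeff (ee l) (sval (sigma (@Hw K n i)) (mono (ee l))).

Lemma lin_sumHop (a : 'I_n -> K) : lin (fun p : L => \sum_l a l *: Hop l p).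
Proof.
apply: (@lin_sumf K n n (fun l p => a l *: Hop l p)) => l b u v.
by rewrite lin_Hop scalerDr !scalerA mulrC.
Qed.

Lemma sigma_H (charK : [pchar K] =i pred0) (sigma : W -> W) :
  is_Lie_aut sigma ->
  forall i p, sval (sigma (@Hw K n i)) p = \sum_l Bmat sigma i l *: Hop l p.
Proof.
move=> H i; have dg := svalP (sigma (@Hw K n i)).
apply: lin_ext; [exact: der_lin | exact: lin_sumHop |] => k.
apply/eqP/freeg_eqP => x; rewrite raddf_sum /=.
under eq_bigr => l _ do rewrite coeffZ Hop_mono coeffZ coeff_mono.
case: (eqVneq x k) => [->|nx]; last first.
  rewrite sigma_diag //; apply/esym; apply: big1 => l _.
  by rewrite !mulr0.
rewrite der_coeff // subrr; apply: eq_bigr => l _; rewrite mulr1 mxE addr0 mulrC //.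
Qed.

Lemma ad_Hop_Tm i c w (p : L) :
  adf (Hop i) (Tm c w) p = ((c i ord0)%:~R) *: Tm c w p.
Proof.
apply/eqP/freeg_eqP => x; rewrite /adf coeffB coeffZ coeff_Hop !coeff_Tm coeff_Hop.
rewrite [(x - c) i ord0]mxE [(- c) i ord0]mxE intrD intrN; ring.
Qed.

Lemma intr_charE (charK : [pchar K] =i pred0) (a b : int) :
  (a%:~R == b%:~R :> K) = (a == b).
Proof.
rewrite -subr_eq0 -intrB -[a == b]subr_eq0.
case: (a - b) => m; first by rewrite -pmulrn (pcharf0P K).1.
by rewrite NegzE intrN oppr_eq0 -pmulrn (pcharf0P K).1 // oppr_eq0.
Qed.

Lemma ee_intr (j i : 'I_n) : ((ee j i ord0)%:~R : K) = (i == j)%:R.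
Proof. by rewrite ee_entry eq_sym; case: (i == j). Qed.

Lemma weight (charK : [pchar K] =i pred0) (sigma : W -> W) :
  is_Lie_aut sigma ->
  forall j, exists c : expo n, forall i,
    \sum_l Bmat sigma i l * ((c l ord0)%:~R) = (i == j)%:R.
Proof.
move=> H j; have [[sigma' c1 c2] _ _] := H.
have hc := Lie_comb H; have hb := Lie_br H.
pose w : 'I_n -> K := fun l => (l == j)%:R.
pose y := TW (ee j) w.
pose z := sigma y.
have hy : forall i, brW (@Hw K n i) y = combW ((ee j i ord0)%:~R) y zeroW.
  move=> i; apply: Wn_ext => p.
  change (adf (Hop i) (Tm (ee j) w) p = (ee j i ord0)%:~R *: Tm (ee j) w p + 0).
  by rewrite ad_Hop_Tm addr0.
have hz : forall i p, adf (sval (sigma (@Hw K n i))) (sval z) p =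
                      (ee j i ord0)%:~R *: sval z p.
  move=> i p; have := congr1 (fun D => sval D p) (congr1 sigma (hy i)).
  by rewrite hb hc (zero_s hc) /= addr0.
have [k [x nz]] : exists k x, coeff x (sval z (mono k)) != 0.
  apply: NNPP => hn.
  have z0 : z = zeroW.
    apply: Wn_ext => p /=; apply/eqP/freeg_eqP => x.
    rewrite coeff_lin ?coeff0; last exact: der_lin (svalP z).
    apply: big1 => m _.
    have -> : coeff x (sval z (mono m)) = 0.
      by apply: NNPP => h; apply: hn; exists m, x; exact/eqP.
    by rewrite mulr0.
  have y0 : y = zeroW by rewrite -(c1 y) -/z z0 -{1}(zero_s hc) c1.
  have := congr1 (fun D => coeff (ee j + ee j) (sval D (mono (ee j)))) y0.
  rewrite /= coeff_Tm_mono dot_ee /w !eqxx mul1r coeff0 => /eqP.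
  by rewrite oner_eq0.
exists (x - k) => i.
have := congr1 (coeff x) (hz i (mono k)).
rewrite /adf coeffB coeffZ !(sigma_H charK H).
have E1 : forall q : L, coeff x (\sum_l Bmat sigma i l *: Hop l q) =
    coeff x q * \sum_l Bmat sigma i l * (x l ord0)%:~R.
  move=> q; rewrite raddf_sum mulr_sumr; apply: eq_bigr => l _.
  by rewrite /= coeffZ coeff_Hop; ring.
have E2 : \sum_l Bmat sigma i l *: Hop l (mono k) =
    (\sum_l Bmat sigma i l * (k l ord0)%:~R) *: mono k.
  rewrite scaler_suml; apply: eq_bigr => l _; by rewrite Hop_mono scalerA.
rewrite E1 E2 (linZ (der_lin (svalP z))) coeffZ ee_intr => h.
have : (\sum_l Bmat sigma i l * ((x - k) l ord0)%:~R - (i == j)%:R) *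
       coeff x (sval z (mono k)) = 0.
  rewrite mulrBl -h.
  have -> : \sum_l Bmat sigma i l * ((x - k) l ord0)%:~R =
     \sum_l Bmat sigma i l * (x l ord0)%:~R - \sum_l Bmat sigma i l * (k l ord0)%:~R.
    by rewrite -sumrB; apply: eq_bigr => l _; rewrite !mxE intrD intrN mulrBr.
  ring.
by move/eqP; rewrite mulf_eq0 (negPf nz) orbF subr_eq0 => /eqP.
Qed.

Lemma coeff_sigmaA (U V : 'M[int]_n) (p : L) x :
  V *m U = 1%:M -> U *m V = 1%:M -> coeff x (sigmaA U p) = coeff (V *m x) p.
Proof.
move=> VU UV; rewrite /sigmaA raddf_sum /=.
under eq_bigr => m _ do rewrite coeffU.
have E : forall m : expo n, (U *m m == x) = (m == V *m x).
  move=> m; apply/eqP/eqP => [<-|->]; first by rewrite mulmxA VU mul1mx.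
  by rewrite mulmxA UV mul1mx.
under eq_bigr => m _ do rewrite E.
exact: sum_dom_coeff1.
Qed.
End LieSec.

Unset Implicit Arguments.

Theorem lemma2p10 (K : fieldType) (n : nat) (charK : [pchar K] =i pred0)
    (sigma : Wn K n -> Wn K n) :
  is_Lie_aut sigma ->
  exists A : 'M[int]_n,
    A \in unitmx /\
    (forall (i : 'I_n) (p : laurent K n),
        sval (sigma (@Hw K n i)) p = \sum_(j < n) (A i j)%:~R *: Hop j p) /\
    (forall (i : 'I_n) (p : laurent K n),
        conjA A (sval (sigma (@Hw K n i))) p = Hop i p).
Proof.
move=> H; have [[sigma' c1 c2] _ _] := H.
have H' := Lie_inv H c1 c2.
set B := Bmat sigma; set C := Bmat sigma'.
have BC : B *m C = 1%:M.
  apply/matrixP => i q; rewrite !mxE.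
  pose s := [seq (B i l, @Hw K n l) | l <- index_enum 'I_n].
  have e1 : forall p, sval (sigma (@Hw K n i)) p = \sum_(az <- s) az.1 *: sval az.2 p.
    by move=> p; rewrite big_map (sigma_H charK H).
  have := comb_transfer (Lie_comb H') e1 (@mono K n (ee q)).
  rewrite c1 big_map => /(congr1 (coeff (ee q))) /= e.
  rewrite Hop_mono coeffZ coeff_mono eqxx mulr1 ee_intr in e.
  rewrite e raddf_sum; apply: eq_bigr => l _; by rewrite /= coeffZ /C /Bmat !mxE.
have CB : C *m B = 1%:M := mulmx1C BC.
have [cs hcs] := fin_all_exists (weight charK H).
have [ds hds] := fin_all_exists (weight charK H').
pose A : 'M[int]_n := \matrix_(i, j) ds j i ord0.
pose A' : 'M[int]_n := \matrix_(i, j) cs j i ord0.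
have CA : C *m map_mx (fun z : int => z%:~R) A = 1%:M.
  apply/matrixP => i j; rewrite !mxE -(hds j i); apply: eq_bigr => l _; by rewrite !mxE.
have BA' : B *m map_mx (fun z : int => z%:~R) A' = 1%:M.
  apply/matrixP => i j; rewrite !mxE -(hcs j i); apply: eq_bigr => l _; by rewrite !mxE.
have eB : B = map_mx (fun z : int => z%:~R) A.
  by rewrite -[B]mulmx1 -CA mulmxA BC mul1mx.
have eC : C = map_mx (fun z : int => z%:~R) A'.
  by rewrite -[C]mulmx1 -BA' mulmxA CB mul1mx.
have AA' : A *m A' = 1%:M.
  apply/matrixP => i j; apply/eqP; rewrite -(intr_charE charK).
  have h := congr1 (fun M : 'M[K]_n => M i j) BC; rewrite /= eB eC !mxE in h.
  rewrite [(A *m A') i j]mxE [(1%:M : 'M[int]_n) i j]mxE rmorph_sum rmorph_nat -h.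
  apply/eqP; apply: eq_bigr => l _; by rewrite !mxE /= intrM.
have unitA : A \in unitmx := (mulmx1_unit AA').1.
have sH : forall i p, sval (sigma (@Hw K n i)) p = \sum_(j < n) (A i j)%:~R *: Hop j p.
  move=> i p; rewrite (sigma_H charK H); apply: eq_bigr => j _.
  by rewrite -/B eB mxE.
exists A; split => //; split => // i p.
apply/eqP/freeg_eqP => y; rewrite /conjA.
set V := invmx A.
have VA : V *m A = 1%:M by rewrite mulVmx.
have AV : A *m V = 1%:M by rewrite mulmxV.
rewrite (coeff_sigmaA _ _ VA AV) sH raddf_sum /=.
under eq_bigr => j _ do rewrite coeffZ coeff_Hop (coeff_sigmaA _ _ AV VA) mulmxA AV mul1mx.
under eq_bigr => j _ do rewrite mulrCA.
rewrite coeff_Hop -mulr_sumr; congr (_ * _).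
have := congr1 (fun M : 'M[int]_(n, 1) => M i ord0) (mulmxA A V y).
rewrite AV mul1mx /= => <-; rewrite mxE rmorph_sum /=.
by apply: eq_bigr => j _; rewrite intrM.
Qed.
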